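(* Consider the networked SIR model with isolation on an undirected graph with nodes $\{1,\dots,n\}$ and adjacency matrix $A=(a_{ij})$, with fixed natural recovery rates $\delta_i>0$, infection rates $\beta_i$ and isolation times following phase-type distributions $(u_1,\Pi_i)$, where $\Pi_i\in\mathbb R^{p\times p}$ is parametrized by positive variables $\gamma_i=(\gamma_{i1},\dots,\gamma_{iq_i})$. Let a set of initially infected nodes, a budget $\bar C>0$, a level $\bar\lambda>0$, intervals $[\underline\beta_i,\bar\beta_i]\subset(0,\infty)$, boxes $\prod_{k=1}^{q_i}[\underline\gamma_{ik},\bar\gamma_{ik}]$ and cost functions $g_i,h_i$ be given. Let $w_i=-\Pi_i\mathbf 1_p$ and let $\mathcal D\Pi_i$, $\mathcal O\Pi_i$ denote the diagonal and off-diagonal parts of $\Pi_i$. Assume that for all $i$: (1) the entries of $w_i$ and of $\mathcal O\Pi_i$ are posynomials in $\gamma_i$; (2) the entries of $-\mathcal D\Pi_i$ are monomials in $\gamma_i$; (3) $g_i$ is a posynomial in $\beta_i$ and $h_i$ is a posynomial in $\gamma_i$. Let $\kappa_{i\ell}>0$, $\alpha_{i\ell}>0$ ($i\in[n]$, $\ell\in[p]$) be constants with $\kappa_{i\ell}(-\Pi_{i,\ell\ell})^{\alpha_{i\ell}}\le(-\Pi_{i,\ell\ell})+\delta_i$ for all possible values of $\gamma_i$. Let $J,B,D$ be the $n\times n$ diagonal matrices with $J_{ii}=S_i(0)$, $B_{ii}=\beta_i$, $D_{ii}=\delta_i$. Suppose $\beta_1,\dots,\beta_n,\gamma_1,\dots,\gamma_n$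 and an entrywise positive $v\in\mathbb R^{np}$ satisfy the posynomial constraints $$v^\top\Big(\bigoplus_{i=1}^n(\mathcal O\Pi_i)^\top+(JBA)\otimes(u_1\mathbf 1_p^\top)\Big)+\mathbf 1_n^\top\bigoplus_{i=1}^n w_i^\top+\mathbf 1_n^\top(D\otimes\mathbf 1_p^\top)<v^\top\bigoplus_{i=1}^n\bigoplus_{\ell=1}^p\kappa_{i\ell}(-\Pi_{i,\ell\ell})^{\alpha_{i\ell}},$$ $$\sum_{i=1}^n\big(g_i(\beta_i)+h_i(\gamma_i)\big)\le\bar C,\quad v^\top\tilde I(0)<\bar\lambda+\sigma_I(0),\quad \underline\beta_i\le\beta_i\le\bar\beta_i,\quad \gamma_i\in\prod_{k=1}^{q_i}[\underline\gamma_{ik},\bar\gamma_{ik}].$$ Then these parameters solve the resource allocation problem with isolation, i.e., the bound and budget constraints hold and the resulting SIR model with isolation satisfies $\lambda\le\bar\lambda$.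
   Context: Phase-type distribution $(\phi,\Pi)$: the distribution of the absorption time of a continuous-time Markov process on states $1,\dots,p+1$ ($1,\dots,p$ transient, $p+1$ absorbing) with generator $\begin{bmatrix}\Pi&w\\0&0\end{bmatrix}$, $w=-\Pi\mathbf 1_p$, $\Pi$ an invertible Metzler matrix with nonpositive row sums, and initial distribution $(\phi,0)$. SIR model with isolation: each node $i$ is at each time in exactly one of the states susceptible, infected, removed, with $\{0,1\}$-indicators $S_i(t),I_i(t),R_i(t)$. A susceptible node $i$ becomes infected with instantaneous rate $\beta_i\sum_j a_{ij}I_j(t)$. Once node $i$ becomes infected, it is removed after a time $\min(X_i,Y_i)$, where $X_i$ is exponential with rate $\delta_i$, $Y_i$ follows the phase-type distribution $(u_1,\Pi_i)$, independent of each other and of the rest of the process; removed nodes stay removed. At time $0$ each node is either susceptible or infected. $\sigma_I(t),\sigma_R(t)$ are the numbers of infected and removed nodes at time $t$; $\lambda=\lim_{t\to\infty}E[\sigma_R(t)]-\sigma_I(0)$. $\tilde I(0)\in\mathbb R^{np}$ stacks $\tilde I_i(0)=u_1$ if $i$ is initially infected and $0$ otherwise. A monomial in positive variables is $cx_1^{a_1}\cdots x_m^{a_m}$, $c>0$, $a_k\in\mathbb R$; a posynomial is a finite sum of monomials. $u_1$ is the first canonical basis vector of $\mathbb R^p$, $\mathbf 1_k$ the all-ones vector, $\otimes$ the Kronecker product, $\bigoplus$ the block-diagonal direct sum, $[n]=\{1,\dots,n\}$; vector inequalities are entrywise. *)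

(* Defs.v *)
From HB Require Import structures.
From mathcomp Require Import all_boot all_order all_algebra.
From mathcomp Require Import all_classical all_reals all_analysis.
Set Implicit Arguments. Unset Strict Implicit. Unset Printing Implicit Defensive.
Import Order.TTheory GRing.Theory Num.Theory.
Import numFieldNormedType.Exports.
Local Open Scope ring_scope.

Definition monomial (R : realType) (q : nat) (f : ('I_q -> R) -> R) : Prop :=
  exists (c : R) (a : 'I_q -> R), 0 < c /\
    forall x : 'I_q -> R, (forall k, 0 < x k) ->
      f x = c * \prod_(k < q) (x k `^ a k).

Definition posynomial (R : realType) (q : nat) (f : ('I_q -> R) -> R) : Prop :=
  exists s : seq (R * ('I_q -> R)), all (fun m => 0 < m.1) s /\
    forall x : 'I_q -> R, (forall k, 0 < x k) ->
      f x = \sum_(m <- s) (m.1 * \prod_(k < q) (x k `^ m.2 k)).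

Definition wvec (R : realType) (p : nat) (M : 'M[R]_p) (l : 'I_p) : R :=
  - \sum_(m < p) M l m.

Definition in_box (R : realType) (q : nat) (lo hi x : 'I_q -> R) : Prop :=
  forall k, lo k <= x k <= hi k.

(* Here the paper's number of phases is p.+1 (p >= 1 is needed for u_1).
   State of one node: inr false = susceptible, inl l = infected in isolation
   phase l (u_1 corresponds to phase ord0), inr true = removed. *)
Definition nstate (p : nat) := ('I_p.+1 + bool)%type.
Definition Sus {p : nat} : nstate p := inr false.
Definition Rem {p : nat} : nstate p := inr true.

Definition gstate (n p : nat) := {ffun 'I_n -> nstate p}.

Definition is_inf {p : nat} (s : nstate p) : bool :=
  if s is inl _ then true else false.

Section Model.
Variables (R : realType) (n p : nat) (A : 'M[R]_n) (beta delta : 'I_n -> R)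
          (Pi : 'I_n -> 'M[R]_p.+1).

Definition node_rate (i : 'I_n) (x : gstate n p) (a b : nstate p) : R :=
  match a, b with
  | inr false, inl l =>
      if l == ord0 then beta i * \sum_(j < n) A i j * (is_inf (x j))%:R else 0
  | inl l, inl m => if l != m then Pi i l m else 0
  | inl l, inr true => wvec (Pi i) l + delta i
  | _, _ => 0
  end.

Definition offrate (x y : gstate n p) : R :=
  \sum_(i < n) ([forall j, (j != i) ==> (x j == y j)])%:R
                * node_rate i x (x i) (y i).

Definition generator (x y : gstate n p) : R :=
  if x == y then - \sum_(z | z != x) offrate x z else offrate x y.
End Model.

Definition init_state (n p : nat) (infected : 'I_n -> bool) : gstate n p :=
  [ffun i => if infected i then inl ord0 else Sus].

Definition sigmaR (n p : nat) (x : gstate n p) : nat := #|[set i | x i == Rem]|.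

Definition sigmaI0 (n : nat) (infected : 'I_n -> bool) : nat :=
  #|[set i | infected i]|.

(* Main.v *)
Require Import Defs.
From HB Require Import structures.
From mathcomp Require Import all_boot all_order all_algebra.
From mathcomp Require Import all_classical all_reals all_analysis.
From mathcomp Require Import ring lra.
Import Order.TTheory GRing.Theory Num.Theory.
Import numFieldNormedType.Exports.
Local Open Scope classical_set_scope.
Local Open Scope ring_scope.


Section Gen.
Context {R : realType}.

Lemma is_derive_sumT (T : finType) (h : T -> R -> R) (t : R) (dh : T -> R) :
  (forall x, is_derive t 1 (h x) (dh x)) ->
  is_derive t 1 (fun s => \sum_x h x s) (\sum_x dh x).
Proof.
move=> H.
suff: forall r, is_derive t 1 (fun s => \sum_(x <- r) h x s) (\sum_(x <- r) dh x) by [].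
elim=> [|a r IH].
  have -> : (fun s : R => \sum_(x <- [::]) h x s) = cst 0.
    by apply/funext => s; rewrite big_nil.
  by rewrite big_nil; exact: is_derive_cst.
have -> : (fun s : R => \sum_(x <- a :: r) h x s) = h a + (fun s => \sum_(x <- r) h x s).
  by apply/funext => s; rewrite big_cons.
by rewrite big_cons; apply: is_deriveD.
Qed.

Lemma mono_deriv (f df : R -> R) :
  (forall t : R, is_derive t 1 f (df t)) -> (forall t : R, 0 < t -> df t <= 0) ->
  forall x y, 0 <= x -> x <= y -> f y <= f x.
Proof.
move=> Hd Hs x y x0 xy.
apply: (@ler0_derive1_nincry R f 0) => //.
- move=> z; rewrite in_itv /= andbT => z0.
  by rewrite derive1E derive_val; apply: Hs.
- apply: continuous_subspaceT => z.
  apply: differentiable_continuous; apply/derivable1_diffP; by case: (Hd z).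
Qed.

Definition negsq (u : R) : R := (Num.min u 0) ^+ 2.

Lemma negsq_derive (u : R) : is_derive u 1 negsq (2 * Num.min u 0).
Proof.
have [u0|u0|->] := ltgtP u 0.
- have H : is_derive u 1 (@GRing.exp R ^~ 2) (2%:R *: u ^+ 1 *: 1).
    apply: DeriveDef; [exact: exprn_derivable | exact: exp_derive].
  apply: (near_eq_is_derive (f := @GRing.exp R ^~ 2)).
    near=> x. rewrite /negsq /=. rewrite (min_l) //. apply: ltW.
    by near: x; exact: lt_nbhsl.
  apply: is_derive_eq H _.
  by rewrite expr1 [_%:A]mulr1.
- apply: (near_eq_is_derive (f := cst 0)).
    near=> x. rewrite /negsq /=. rewrite (min_r) ?expr0n //. apply: ltW.
    by near: x; exact: lt_nbhsr.
  rewrite mulr0; exact: is_derive_cst.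
- rewrite mulr0.
  have H0 : Num.min h 0 @[h --> (0:R)^'] --> (0:R).
    have : Num.min h 0 @[h --> (0:R)] --> Num.min (0:R) 0.
      apply: continuous_min; [exact: cvg_id | exact: cvg_cst].
    rewrite minxx => H; exact: cvg_within_filter H.
  have Hl : (fun h : R => h^-1 *: ((negsq \o shift 0) (h *: 1) - negsq 0)) @ (0:R)^' --> (0:R).
    apply: cvg_trans H0.
    apply: near_eq_cvg.
    near=> h.
    rewrite /negsq /= minxx expr0n /= subr0 addr0 [h *: 1]mulr1.
    have hn0 : h != 0 by near: h; exact: nbhs_dnbhs_neq.
    have [h0|h0] := ltP h 0.
      by rewrite expr2 [_ *: _]mulrA mulVf // mul1r.
    by rewrite expr0n /= [_ *: _]mulr0.
  apply: DeriveDef.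
    by apply/cvg_ex; exists 0.
  exact: cvg_lim Hl.
Unshelve. all: by end_near.
Qed.


Lemma is_derive_comp {f g : R -> R} {t df dg : R} :
  is_derive t 1 f df -> is_derive (f t) 1 g dg ->
  is_derive t 1 (g \o f) (dg * df).
Proof.
move=> Hf Hg.
have df' : derivable f t 1 by case: Hf.
have dg' : derivable g (f t) 1 by case: Hg.
apply: DeriveDef.
  apply/derivable1_diffP; apply: differentiable_comp; exact/derivable1_diffP.
rewrite -derive1E derive1_comp // !derive1E.
by rewrite (@derive_val _ _ _ _ _ _ _ Hf) (@derive_val _ _ _ _ _ _ _ Hg).
Qed.

Lemma is_derive_lin (c t : R) : is_derive t 1 (fun s : R => c * s) c.
Proof.
have H := @is_deriveZ R R R id c t 1 1 (is_derive_id t 1).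
by apply: is_derive_eq H _; rewrite [c *: 1]mulr1.
Qed.

Lemma sum_constT (T : finType) (c : R) : \sum_(x : T) c = c *+ #|T|.
Proof. by rewrite sumr_const; congr (_ *+ _); apply: eq_card. Qed.

Lemma ode_pos (T : finType) (Q : T -> T -> R) (P : R -> T -> R) :
  (forall (t : R) x, is_derive t 1 (fun s => P s x) (\sum_y P t y * Q y x)) ->
  (forall x y, x != y -> 0 <= Q x y) ->
  (forall x, 0 <= P 0 x) ->
  forall t, 0 <= t -> forall x, 0 <= P t x.
Proof.
move=> HD HQ H0.
pose N s := \sum_x negsq (P s x).
pose m s x := Num.min (P s x) 0.
pose dN t := \sum_x (2 * m t x) * (\sum_y P t y * Q y x).
have HN : forall t : R, is_derive t 1 N (dN t).
  move=> t; apply: is_derive_sumT => x.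
  have := is_derive_comp (HD t x) (negsq_derive (P t x)). done.
pose K := \sum_x \sum_y `|Q x y|.
have K0 : 0 <= K by apply: sumr_ge0 => x _; apply: sumr_ge0 => y _.
have KQ : forall x y, `|Q x y| <= K.
  move=> x y; rewrite /K (bigD1 x) //= (bigD1 y) //= -addrA lerDl.
  apply: addr_ge0; [apply: sumr_ge0 => *|apply: sumr_ge0 => *; apply: sumr_ge0 => *] => //.
clearbody K.
pose L := 4 * K * #|T|%:R.
have mle0 : forall s x, m s x <= 0 by move=> s x; rewrite /m ge_min lexx orbT.
have msq : forall s x, m s x ^+ 2 = negsq (P s x) by [].
have mP : forall s x, m s x * P s x = m s x ^+ 2.
  move=> s x; rewrite /m; have [h|h] := leP (P s x) 0.
    by rewrite expr2.
  by rewrite mul0r expr0n.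
have mleP : forall s x, m s x <= P s x by move=> s x; rewrite /m ge_min lexx.
have bound : forall t : R, dN t <= L * N t.
  move=> t.
  have step1 : dN t <= 2 * \sum_x \sum_y (K * (m t x ^+ 2 + m t y ^+ 2)).
    rewrite /dN mulr_sumr; apply: ler_sum => x _.
    rewrite -mulrA ler_pM2l // mulr_sumr; apply: ler_sum => y _.
    have e1 : m t x * (P t y * Q y x) <= m t x * m t y * Q y x.
      have [->|nxy] := eqVneq y x.
        by rewrite mulrA mP expr2.
      rewrite mulrA [m t x * P t y]mulrC [_ * m t y]mulrC.
      apply: ler_wpM2r; first exact: HQ.
      by apply: ler_wnM2r => //.
    apply: (le_trans e1).
    apply: (le_trans (ler_norm _)).
    rewrite !normrM.
    have e2 : `|m t x| * `|m t y| <= m t x ^+ 2 + m t y ^+ 2.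
      rewrite -[m t x ^+ 2]real_normK ?num_real // -[m t y ^+ 2]real_normK ?num_real //.
      have hh := sqrrD (`|m t x|) (`|m t y|).
      nra.
    rewrite mulrC; apply: ler_pM => //.
  apply: (le_trans step1).
  have -> : \sum_x \sum_y (K * (m t x ^+ 2 + m t y ^+ 2)) = K * (2 * #|T|%:R * N t).
    have E : forall x, \sum_y K * (m t x ^+ 2 + m t y ^+ 2) = K * m t x ^+ 2 *+ #|T| + K * N t.
      move=> x; rewrite (eq_bigr (fun y => K * m t x ^+ 2 + K * m t y ^+ 2)); last by move=> y _; rewrite mulrDr.
      by rewrite big_split /= sumr_const -mulr_sumr.
    rewrite (eq_bigr _ (fun x _ => E x)) big_split /= sum_constT sumrMnl -mulr_sumr.
    change (\sum_x m t x ^+ 2) with (N t).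
    move: (N t) => z; move: #|T| => k. rewrite -mulr_natr; ring.
  rewrite le_eqVlt; apply/orP; left; apply/eqP; rewrite /L. move: (N t) => z; move: (#|T|%:R : R) => c. ring.
pose g s := expR (- L * s).
have Hg : forall t : R, is_derive t 1 g (expR (- L * t) * (- L)).
  move=> t; apply: (is_derive_comp (f := fun s => - L * s) (g := expR)).
  exact: is_derive_lin.
pose G := N * g.
have HG : forall t : R, is_derive t 1 G (N t *: (expR (- L * t) * (- L)) + g t *: dN t).
  by move=> t; apply: is_deriveM.
have Gdec : forall t, 0 <= t -> G t <= G 0.
  move=> t t0; apply: (@mono_deriv G (fun t => N t *: (expR (- L * t) * (- L)) + g t *: dN t) HG) => // s _.
  rewrite /g /=.
  change (N s * (expR (- L * s) * - L) + expR (- L * s) * dN s <= 0).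
  have eg := expR_gt0 (- L * s).
  have := bound s.
  move: (N s) (dN s) (expR (- L * s)) eg => a b e eg h.
  have -> : a * (e * - L) + e * b = e * (b - L * a) by ring.
  by apply: mulr_ge0_le0; [exact: ltW | rewrite subr_le0].
have N0 : N 0 = 0.
  rewrite /N big1 // => x _; rewrite /negsq.
  by rewrite (_ : Num.min (P 0 x) 0 = 0) ?expr0n //; apply/min_idPr; exact: H0.
have Nge0 : forall s, 0 <= N s by move=> s; apply: sumr_ge0 => x _; rewrite /negsq sqr_ge0.
move=> t t0 x.
have Nt : N t = 0.
  have h : N t * g t <= N 0 * g 0 := Gdec t t0. rewrite N0 mul0r /g in h.
  have eg := expR_gt0 (- L * t).
  have := Nge0 t; move: (N t) h => a h ha.
  have : a <= 0 by nra.
  by move=> h2; apply/eqP; rewrite eq_le h2 ha.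
have := Nt; rewrite /N => /eqP; rewrite psumr_eq0; last by move=> y _; rewrite /negsq sqr_ge0.
move=> /allP /(_ x (mem_index_enum _)) /implyP /(_ isT).
rewrite /negsq sqrf_eq0 => /eqP hm.
by move: (mleP t x); rewrite /m hm.
Qed.



Lemma ode_moment (T : finType) (Q : T -> T -> R) (P : R -> T -> R) (c : T -> R) :
  (forall (t : R) x, is_derive t 1 (fun s => P s x) (\sum_y P t y * Q y x)) ->
  forall t : R, is_derive t 1 (fun s => \sum_x P s x * c x)
                  (\sum_y P t y * \sum_x Q y x * c x).
Proof.
move=> HD t.
have H : is_derive t 1 (fun s => \sum_x P s x * c x) (\sum_x (\sum_y P t y * Q y x) * c x).
  apply: is_derive_sumT => x.
  have Hx := @is_deriveZ R R R (fun s => P s x) (c x) t 1 _ (HD t x).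
  have -> : (fun s => P s x * c x) = (c x) \*: (fun s => P s x).
    by apply/funext => s; rewrite /= mulrC.
  by apply: is_derive_eq Hx _; rewrite [_ *: _]mulrC.
apply: is_derive_eq H _.
under eq_bigr do rewrite mulr_suml.
rewrite exchange_big /=; apply: eq_bigr => y _.
by rewrite mulr_sumr; apply: eq_bigr => x _; rewrite mulrA.
Qed.

End Gen.


Section Model2.
Context {R : realType} {n p : nat} (A : 'M[R]_n) (beta delta : 'I_n -> R)
  (Pi : 'I_n -> 'M[R]_p.+1).

Definition upd (y : gstate n p) (i : 'I_n) (b : nstate p) : gstate n p :=
  [ffun j => if j == i then b else y j].

Lemma single_sum (y : gstate n p) (i : 'I_n) (G : gstate n p -> R) :
  \sum_(x : gstate n p) ([forall j, (j != i) ==> (y j == x j)])%:R * G x = \sum_b G (upd y i b).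
Proof.
rewrite (partition_big (fun x : gstate n p => x i) predT) //=.
apply: eq_bigr => b _.
rewrite (bigD1 (upd y i b)) /=; last by rewrite /upd ffunE eqxx.
rewrite big1 ?addr0.
  suff -> : [forall j, (j != i) ==> (y j == upd y i b j)] by rewrite mul1r.
  apply/forallP => j; apply/implyP => ji; rewrite /upd ffunE (negbTE ji) //.
move=> x /andP [/eqP xib xn].
case: (boolP [forall j, (j != i) ==> (y j == x j)]) => [h|]; last by rewrite mul0r.
exfalso; move/eqP: xn; apply; apply/ffunP => j; rewrite /upd ffunE.
case: (eqVneq j i) => [->|ji]; first by rewrite xib.
by move/forallP: h => /(_ j) /implyP /(_ ji) /eqP.
Qed.

Lemma gen_diff (y : gstate n p) (V : gstate n p -> R) :
  \sum_(x : gstate n p) generator A beta delta Pi y x * V x =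
  \sum_(x : gstate n p) offrate A beta delta Pi y x * (V x - V y).
Proof.
rewrite (bigD1 y) //= [RHS](bigD1 y) //= subrr mulr0 add0r.
rewrite /generator eqxx mulNr mulr_suml -sumrN -big_split /=.
apply: eq_bigr => x xy; rewrite eq_sym (negbTE xy) mulrBr; ring.
Qed.

Lemma gen_additive (phi : 'I_n -> nstate p -> R) (y : gstate n p) :
  \sum_(x : gstate n p) generator A beta delta Pi y x * (\sum_i phi i (x i)) =
  \sum_i \sum_b node_rate A beta delta Pi i y (y i) b * (phi i b - phi i (y i)).
Proof.
rewrite gen_diff.
rewrite /offrate.
under eq_bigr do rewrite mulr_suml.
rewrite exchange_big /=; apply: eq_bigr => i _.
pose G := fun x : gstate n p => node_rate A beta delta Pi i y (y i) (x i) * (phi i (x i) - phi i (y i)).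
transitivity (\sum_b G (upd y i b)); last by apply: eq_bigr => b _; rewrite /G /upd ffunE eqxx.
rewrite -single_sum.
apply: eq_bigr => x _.
case: (boolP [forall j, (j != i) ==> (y j == x j)]) => h; last by rewrite !mul0r.
rewrite !mul1r /G; congr (_ * _).
rewrite -sumrB (bigD1 i) //= big1 ?addr0 // => j ji.
by move/forallP: h => /(_ j) /implyP /(_ ji) /eqP ->; rewrite subrr.
Qed.

End Model2.

Section Model3.
Context {R : realType} {n p : nat} (A : 'M[R]_n) (beta delta : 'I_n -> R)
  (Pi : 'I_n -> 'M[R]_p.+1)
  (hbeta : forall i, 0 <= beta i) (hA : forall i j, 0 <= A i j)
  (hPi : forall i l m, l != m -> 0 <= Pi i l m)
  (hw : forall i l, 0 <= wvec (Pi i) l + delta i).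

Lemma nr_ge0 i x a b : 0 <= node_rate A beta delta Pi i x a b.
Proof.
case: a => [l|[]]; case: b => [m|[]] //=.
- by case: ifP => // /hPi.
- by case: ifP => // _; apply: mulr_ge0 => //; apply: sumr_ge0 => j _; apply: mulr_ge0.
Qed.

Lemma off_ge0 x y : 0 <= offrate A beta delta Pi x y.
Proof. by apply: sumr_ge0 => i _; apply: mulr_ge0 => //; exact: nr_ge0. Qed.

Lemma gen_offdiag x y : x != y -> 0 <= generator A beta delta Pi x y.
Proof. by move=> xy; rewrite /generator (negbTE xy); exact: off_ge0. Qed.

Definition phiR (i : 'I_n) (b : nstate p) : R := (b == Rem)%:R.

Lemma nr_rem i x b : node_rate A beta delta Pi i x Rem b = 0.
Proof. by case: b => [m|[]]. Qed.

Lemma sigma_nondecr (y : gstate n p) :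
  0 <= \sum_(x : gstate n p) generator A beta delta Pi y x * (\sum_i phiR i (x i)).
Proof.
rewrite gen_additive; apply: sumr_ge0 => i _; apply: sumr_ge0 => b _.
case: (eqVneq (y i) Rem) => [->|yr]; first by rewrite nr_rem mul0r.
rewrite /phiR (negbTE yr) subr0; apply: mulr_ge0; first exact: nr_ge0.
by case: (b == Rem).
Qed.

End Model3.

Section Model4.
Context {R : realType} {n p : nat} (A : 'M[R]_n) (beta delta : 'I_n -> R)
  (Pi : 'I_n -> 'M[R]_p.+1)
  (hbeta : forall i, 0 <= beta i) (hA : forall i j, 0 <= A i j)
  (hPi : forall i l m, l != m -> 0 <= Pi i l m)
  (hw : forall i l, 0 <= wvec (Pi i) l + delta i)
  (infected : 'I_n -> bool) (kappa alpha : 'I_n -> 'I_p.+1 -> R)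
  (v : 'I_n -> 'I_p.+1 -> R) (hv : forall i l, 0 < v i l)
  (Hk : forall i l, kappa i l * (- Pi i l l) `^ alpha i l <= - Pi i l l + delta i)
  (Hc1 : forall i l,
     \sum_(m < p.+1 | m != l) v i m * Pi i l m
     + \sum_(j < n) v j ord0 * ((~~ infected j)%:R * beta j * A j i)
     + wvec (Pi i) l
     + delta i
     < v i l * (kappa i l * (- Pi i l l) `^ alpha i l)).

Definition phiV (i : 'I_n) (b : nstate p) : R :=
  match b with
  | inl l => v i l
  | inr true => 1
  | inr false => if infected i then v i ord0 else 0
  end.

Lemma V_noninc (y : gstate n p) :
  \sum_(x : gstate n p) generator A beta delta Pi y x * (\sum_i phiV i (x i)) <= 0.
Proof.
rewrite gen_additive.
pose c i := (~~ infected i)%:R * beta i * v i ord0.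
pose s i := \sum_j A i j * (is_inf (y j))%:R.
pose X i l := \sum_(m | m != l) Pi i l m * (v i m - v i l) + (wvec (Pi i) l + delta i) * (1 - v i l).
pose Aterm i := match y i with inl l => X i l | _ => 0 end.
pose Bterm i := (y i == Sus)%:R * (c i * s i).
have Si : forall i, \sum_b node_rate A beta delta Pi i y (y i) b * (phiV i b - phiV i (y i))
    = Aterm i + Bterm i.
  move=> i; rewrite big_sumType big_bool /= /Aterm /Bterm.
  case: (y i) => [l|[]] /=.
  - rewrite mul0r addr0 mul0r addr0 /X; congr (_ + _).
    rewrite [RHS]big_mkcond /=; apply: eq_bigr => m _.
    by case: (eqVneq m l) => [->|ml]; [rewrite ?eqxx /= ?mul0r | ].
  - by under eq_bigr do rewrite mul0r; rewrite big1_eq !mul0r !addr0.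
  - rewrite !mul0r !addr0 add0r mul1r (bigD1 ord0) //=.
    rewrite [X in _ + X = _]big1 ?addr0; last by move=> m /negbTE ->; rewrite mul0r.
    rewrite /c /s; case: (infected i) => /=; ring.
rewrite (eq_bigr _ (fun i _ => Si i)) big_split /=.
pose Y i := \sum_j c j * A j i.
have HB : \sum_i Bterm i <= \sum_i (is_inf (y i))%:R * Y i.
  apply: (@le_trans _ _ (\sum_i c i * s i)).
    apply: ler_sum => i _; rewrite /Bterm.
    have cs0 : 0 <= c i * s i.
      apply: mulr_ge0; first by apply: mulr_ge0; [apply: mulr_ge0 => //; case: (~~ _)|exact: ltW].
      by apply: sumr_ge0 => j _; apply: mulr_ge0 => //; case: is_inf.
    by case: (y i == Sus); rewrite ?mul1r ?mul0r.
  rewrite /s /Y; under eq_bigr do rewrite mulr_sumr.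
  rewrite exchange_big /=; apply: ler_sum => j _.
  rewrite mulr_sumr; apply: ler_sum => i _.
  by rewrite le_eqVlt; apply/orP; left; apply/eqP; ring.
have key : forall i l, X i l + Y i <= 0.
  move=> i l.
  have hY : Y i = \sum_j v j ord0 * ((~~ infected j)%:R * beta j * A j i).
    by apply: eq_bigr => j _; rewrite /c; ring.
  pose S1 := \sum_(m < p.+1 | m != l) v i m * Pi i l m.
  pose S2 := \sum_(m < p.+1 | m != l) Pi i l m.
  have eX : X i l = S1 - v i l * S2 + (wvec (Pi i) l + delta i) * (1 - v i l).
    rewrite /X; congr (_ + _).
    rewrite /S1 /S2 mulr_sumr -sumrB; apply: eq_bigr => m _; ring.
  have ew : wvec (Pi i) l = - (Pi i l l + S2) by rewrite /wvec (bigD1 l).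
  have h1 := Hc1 i l.
  have h2 : v i l * (kappa i l * (- Pi i l l) `^ alpha i l) <= v i l * (- Pi i l l + delta i).
    by rewrite ler_wpM2l // ?Hk // ltW.
  rewrite eX; rewrite -/S1 -hY ew in h1; rewrite ew.
  clear eX ew; move: h1 h2; move: S1 S2 (Y i) (v i l) (Pi i l l) (delta i) (kappa i l * (- Pi i l l) `^ alpha i l).
  move=> a b yy vv pp dd kk h1 h2.
  nra.
apply: (@le_trans _ _ (\sum_i Aterm i + \sum_i (is_inf (y i))%:R * Y i)).
  by rewrite lerD2l.
rewrite -big_split /=; apply: sumr_le0 => i _.
rewrite /Aterm; case: (y i) => [l|b] /=.
  by rewrite mul1r; exact: key.
by rewrite mul0r addr0.
Qed.
End Model4.


Lemma posy_ge0 (R : realType) (q : nat) (f : ('I_q -> R) -> R) (x : 'I_q -> R) :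
  posynomial f -> (forall k, 0 < x k) -> 0 <= f x.
Proof.
move=> [s [hs hf]] hx; rewrite hf // big_seq.
apply: sumr_ge0 => m ms; apply: mulr_ge0; first exact: ltW ((allP hs) m ms).
by apply: prodr_ge0 => k _; exact: powR_ge0.
Qed.

Arguments posy_ge0 {R q f x}.

Lemma sigmaR_sum (R : realType) (n p : nat) (x : gstate n p) :
  (sigmaR x)%:R = \sum_i phiR (R := R) i (x i).
Proof.
rewrite /sigmaR -sum1dep_card natr_sum big_mkcond /=.
by apply: eq_bigr => i _; rewrite /phiR; case: (x i == Rem).
Qed.

Theorem theorem2 (R : realType) (n p : nat)
  (A : 'M[R]_n)
  (hA01 : forall i j, A i j = 0 \/ A i j = 1)
  (hAsym : forall i j, A i j = A j i)
  (delta : 'I_n -> R) (hdelta : forall i, 0 < delta i)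
  (q : 'I_n -> nat) (Pi : forall i : 'I_n, ('I_(q i) -> R) -> 'M[R]_p.+1)
  (infected : 'I_n -> bool)
  (Cbar lambar : R) (hCbar : 0 < Cbar) (hlambar : 0 < lambar)
  (blo bhi : 'I_n -> R) (hb : forall i, 0 < blo i <= bhi i)
  (glo ghi : forall i : 'I_n, 'I_(q i) -> R)
  (hg : forall i k, 0 < glo i k <= ghi i k)
  (g : 'I_n -> R -> R) (h : forall i : 'I_n, ('I_(q i) -> R) -> R)
  (H1w : forall i l, posynomial (fun gm => wvec (Pi i gm) l))
  (H1o : forall i l m, l != m -> posynomial (fun gm => Pi i gm l m))
  (H2 : forall i l, monomial (fun gm => - Pi i gm l l))
  (H3g : forall i, posynomial (fun x : 'I_1 -> R => g i (x ord0)))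
  (H3h : forall i, posynomial (h i))
  (kappa alpha : 'I_n -> 'I_p.+1 -> R)
  (hkappa : forall i l, 0 < kappa i l) (halpha : forall i l, 0 < alpha i l)
  (Hkappa : forall i (gm : 'I_(q i) -> R), in_box (glo i) (ghi i) gm ->
     forall l, kappa i l * (- Pi i gm l l) `^ alpha i l <= - Pi i gm l l + delta i)
  (beta : 'I_n -> R) (gamma : forall i : 'I_n, 'I_(q i) -> R)
  (v : 'I_n -> 'I_p.+1 -> R) (hv : forall i l, 0 < v i l)
  (Hinv : forall i, Pi i (gamma i) \in unitmx)
  (* main posynomial constraint, written entrywise at column (i,l) *)
  (Hc1 : forall i l,
     \sum_(m < p.+1 | m != l) v i m * Pi i (gamma i) l m
     + \sum_(j < n) v j ord0 * ((~~ infected j)%:R * beta j * A j i)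
     + wvec (Pi i (gamma i)) l
     + delta i
     < v i l * (kappa i l * (- Pi i (gamma i) l l) `^ alpha i l))
  (Hc2 : \sum_(i < n) (g i (beta i) + h i (gamma i)) <= Cbar)
  (Hc3 : \sum_(i < n | infected i) v i ord0 < lambar + (sigmaI0 infected)%:R)
  (Hc4 : forall i, blo i <= beta i <= bhi i)
  (Hc5 : forall i, in_box (glo i) (ghi i) (gamma i)) :
  (forall i, blo i <= beta i <= bhi i) /\
  (forall i, in_box (glo i) (ghi i) (gamma i)) /\
  \sum_(i < n) (g i (beta i) + h i (gamma i)) <= Cbar /\
  (forall P : R -> gstate n p -> R,
     (forall x, P 0 x = (x == init_state p infected)%:R) ->
     (forall (t : R) (x : gstate n p), is_derive t (1 : R) (fun s : R => P s x)
        (\sum_(y : gstate n p)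
            P t y * generator A beta delta (fun i => Pi i (gamma i)) y x)) ->
     exists lim_R : R,
       (fun t => \sum_(x : gstate n p) P t x * (sigmaR x)%:R) @ +oo --> lim_R /\
       lim_R - (sigmaI0 infected)%:R <= lambar).
Proof.
split; first exact: Hc4.
split; first exact: Hc5.
split; first exact: Hc2.
move=> P HP0 HPd.
set Pig := fun i => Pi i (gamma i).
set Q := generator A beta delta Pig.
have gpos : forall i k, 0 < gamma i k.
  move=> i k; have /andP[e1 _] := Hc5 i k; have /andP[e2 _] := hg i k.
  exact: lt_le_trans e2 e1.
have hPi : forall i l m, l != m -> 0 <= Pig i l m.
  by move=> i l m lm; have := posy_ge0 (H1o i l m lm) (gpos i).
have hw : forall i l, 0 <= wvec (Pig i) l + delta i.
  move=> i l; apply: addr_ge0; last exact: ltW.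
  by have := posy_ge0 (H1w i l) (gpos i).
have hbeta : forall i, 0 <= beta i.
  move=> i; have /andP[e1 _] := Hc4 i; have /andP[e2 _] := hb i.
  exact: ltW (lt_le_trans e2 e1).
have hA : forall i j, 0 <= A i j by move=> i j; case: (hA01 i j) => ->.
have Hk : forall i l, kappa i l * (- Pig i l l) `^ alpha i l <= - Pig i l l + delta i.
  by move=> i l; apply: Hkappa.
have Ppos : forall t, 0 <= t -> forall x, 0 <= P t x.
  apply: (@ode_pos _ _ Q P) => //.
    by move=> x y; exact: gen_offdiag.
  by move=> x; rewrite HP0; case: (_ == _).
pose V := fun x : gstate n p => \sum_i phiV infected v i (x i).
pose EV t := \sum_x P t x * V x.
pose ES t := \sum_x P t x * (sigmaR x)%:R.
have HEV := @ode_moment _ _ _ _ V HPd.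
have HES := @ode_moment _ _ _ _ (fun x : gstate n p => (sigmaR x)%:R) HPd.
have hVle : forall y, \sum_x Q y x * V x <= 0.
  move=> y; rewrite /Q /V; apply: V_noninc => //.
have hSge : forall y, 0 <= \sum_x Q y x * (sigmaR x)%:R.
  move=> y; under eq_bigr do rewrite sigmaR_sum.
  rewrite /Q; apply: sigma_nondecr => //.
have EVdec : forall t, 0 <= t -> EV t <= EV 0.
  move=> t t0.
  apply: (@mono_deriv _ EV (fun t => \sum_y P t y * \sum_x Q y x * V x) HEV) => // s s0.
  apply: sumr_le0 => y _; apply: mulr_ge0_le0; [exact: Ppos (ltW s0) y | exact: hVle].
have ESinc : forall x y, 0 <= x -> x <= y -> ES x <= ES y.
  move=> x y x0 xy.
  have HN : forall t : R, is_derive t 1 (- ES) (- \sum_y P t y * \sum_x Q y x * (sigmaR x)%:R).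
    by move=> t; apply: is_deriveN.
  have := @mono_deriv _ (- ES) _ HN _ x y x0 xy.
  rewrite /= lerN2; apply => s s0; rewrite oppr_le0.
  apply: sumr_ge0 => z _; apply: mulr_ge0; [exact: Ppos (ltW s0) z | exact: hSge].
have phile : forall i b, phiR (R := R) i b <= phiV infected v i b.
  move=> i [l|[]] /=; rewrite /phiR /=.
  - exact: ltW.
  - by [].
  - by case: (infected i) => //; exact: ltW.
have ESleEV : forall t, 0 <= t -> ES t <= EV t.
  move=> t t0; apply: ler_sum => x _; apply: ler_wpM2l; first exact: Ppos.
  by rewrite sigmaR_sum; apply: ler_sum => i _.
have EV0 : EV 0 = \sum_(i | infected i) v i ord0.
  rewrite /EV (bigD1 (init_state p infected)) //= big1 ?addr0; last first.
    by move=> x /negbTE xi; rewrite HP0 xi mul0r.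
  rewrite HP0 eqxx mul1r /V [RHS]big_mkcond /=; apply: eq_bigr => i _.
  by rewrite /init_state ffunE; case hi: (infected i) => //=; rewrite hi.
pose B := EV 0.
have hB : B < lambar + (sigmaI0 infected)%:R by rewrite /B EV0.
pose f t := ES (Num.max t 0).
have max0 : forall t : R, 0 <= Num.max t 0 by move=> t; rewrite le_max lexx orbT.
have fB : forall t, f t <= B.
  move=> t; apply: le_trans (ESleEV _ (max0 t)) (EVdec _ (max0 t)).
have fnd : nondecreasing_fun f.
  move=> x y xy; apply: ESinc; first exact: max0.
  by rewrite ge_max !le_max xy lexx !orbT.
have fub : has_ubound (range f).
  by exists B => z [t _ <-]; exact: fB.
have cv := nondecreasing_cvgr fnd fub.
exists (sup (range f)); split.
  apply: cvg_trans cv; apply: near_eq_cvg; near=> t.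
  rewrite /f max_l //; near: t; exact: nbhs_pinfty_ge.
have : sup (range f) <= B.
  apply: (cvgr_to_le cv); near=> t; exact: fB.
move: hB; lra.
Unshelve. all: by end_near.
Qed.
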